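(* Let $n\geq 1$ and let $C_1,\ldots,C_n$ be finite cyclic groups whose orders are pairwise coprime. Then $$M^{(2)}\Big(C_1 * C_2 * \cdots * C_n\Big)\cong \bigoplus_{i=1}^{n} M^{(2)}(C_i),$$ where $C_1*\cdots*C_n$ denotes the free product of the $C_i$.
   Context: For a group $G$ with a free presentation $1\to R\to F\to G\to 1$ ($F$ free, $R\trianglelefteq F$), and an integer $c\geq 1$, the $c$-nilpotent multiplier of $G$ (the Baer-invariant of $G$ with respect to the variety of nilpotent groups of class at most $c$) is $M^{(c)}(G)=\dfrac{R\cap \gamma_{c+1}(F)}{[R,\,_cF]}$, where $\gamma_{k}(F)$ is the $k$-th term of the lower central series of $F$ ($\gamma_1(F)=F$, $\gamma_{k+1}(F)=[\gamma_k(F),F]$), $[R,\,_1F]=[R,F]$ and $[R,\,_cF]=[[R,\,_{c-1}F],F]$. This group is abelian and, up to isomorphism, independent of the chosen free presentation. $M^{(1)}(G)$ is the Schur multiplier. *)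

(* Defs.v *)
From mathcomp Require Import all_boot.
Set Implicit Arguments. Unset Strict Implicit. Unset Printing Implicit Defensive.

(* A (possibly infinite) group given by its operations.  No axioms are  *)
(* bundled: the only instances used below (free groups and finite       *)
(* direct products of them) are genuine groups.                         *)
Record grp := Grp {
  gcar :> Type;
  gmul : gcar -> gcar -> gcar;
  ginv : gcar -> gcar;
  gone : gcar }.

Section GroupNotions.
Variable G : grp.
Implicit Types (x y : G) (S A B : G -> Prop).

Definition gpow x (m : nat) : G := iter m (gmul x) (gone G).
Definition gconj x y : G := gmul (ginv y) (gmul x y).
Definition gcomm x y : G := gmul (ginv x) (gmul (ginv y) (gmul x y)).

Fixpoint all_in S (l : seq (G * bool)) : Prop :=
  match l with [::] => True | p :: l' => S p.1 /\ all_in S l' end.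

Definition gen S : G -> Prop := fun x =>
  exists l : seq (G * bool),
    all_in S l /\
    x = foldr (fun p acc => gmul (if p.2 then ginv p.1 else p.1) acc) (gone G) l.

Definition setTg : G -> Prop := fun _ => True.

Definition commsub A B : G -> Prop :=
  gen (fun z => exists a b, A a /\ B b /\ z = gcomm a b).

Fixpoint gamma (k : nat) : G -> Prop :=
  match k with
  | 0 | 1 => setTg
  | k'.+1 => commsub (gamma k') setTg
  end.

Fixpoint itcomm (R : G -> Prop) (c : nat) : G -> Prop :=
  match c with
  | 0 => R
  | c'.+1 => commsub (itcomm R c') setTg
  end.

Definition ncl S : G -> Prop := gen (fun z => exists s y, S s /\ z = gconj s y).

(* the c-nilpotent multiplier of the presentation 1 -> R -> F -> F/R -> 1
   is the quotient (mult_num R c) / (mult_den R c) *)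
Definition mult_num (R : G -> Prop) (c : nat) : G -> Prop :=
  fun x => R x /\ gamma c.+1 x.
Definition mult_den (R : G -> Prop) (c : nat) : G -> Prop := itcomm R c.
End GroupNotions.

(* Isomorphism of subquotients A/B (in G) and A'/B' (in H), B normal in A,
   B' normal in A': a map f : A -> A' inducing a bijective homomorphism
   A/B -> A'/B'. *)
Definition quot_iso (G H : grp) (A B : G -> Prop) (A' B' : H -> Prop) : Prop :=
  exists f : G -> H,
    [/\ (forall x, A x -> A' (f x)),
        (forall x y, A x -> A y ->
           B' (gmul (ginv (f (gmul x y))) (gmul (f x) (f y)))),
        (forall x, A x -> (B x <-> B' (f x))) &
        (forall y, A' y -> exists2 x, A x & B' (gmul (ginv (f x)) y))].

Definition prodgrp (I : Type) (G : grp) : grp :=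
  @Grp (I -> G) (fun f g i => gmul (f i) (g i)) (fun f i => ginv (f i))
       (fun _ => gone G).

(* Free group on an eqType X: freely reduced words over X x bool         *)
(* (true = inverse letter).                                             *)
Section FreeGroup.
Variable X : eqType.
Definition letter := (X * bool)%type.

Fixpoint reducedb (w : seq letter) : bool :=
  match w with
  | a :: ((b :: _) as w') => ~~ ((a.1 == b.1) && (a.2 != b.2)) && reducedb w'
  | _ => true
  end.

Definition cons_red (a : letter) (w : seq letter) : seq letter :=
  match w with
  | b :: w' => if (a.1 == b.1) && (a.2 != b.2) then w' else a :: w
  | [::] => [:: a]
  end.

Definition red (w : seq letter) : seq letter := foldr cons_red [::] w.

Lemma reducedb_tail a w : reducedb (a :: w) -> reducedb w.
Proof. by case: w => [|b w] //= /andP[]. Qed.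

Lemma cons_red_reduced a w : reducedb w -> reducedb (cons_red a w).
Proof.
case: w => [|b w] //= Hw.
case: ifP => Hc; first exact: (reducedb_tail Hw).
by rewrite /= Hc.
Qed.

Lemma red_reduced w : reducedb (red w).
Proof. by elim: w => [|a w IH] //=; apply: cons_red_reduced. Qed.

Definition FGtype := {w : seq letter | reducedb w}.
Definition mkFG (w : seq letter) : FGtype := exist _ (red w) (red_reduced w).
Definition flip (a : letter) : letter := (a.1, ~~ a.2).

Definition FG : grp :=
  @Grp FGtype (fun u v => mkFG (proj1_sig u ++ proj1_sig v))
       (fun u => mkFG (map flip (rev (proj1_sig u))))
       (mkFG [::]).

Definition fgen (x : X) : FG := mkFG [:: (x, false)].
End FreeGroup.

Definition cyc_rel (m : nat) : FG unit -> Prop :=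
  ncl (fun z => z = gpow (fgen tt) m).

Definition freeprod_rel (n : nat) (m : 'I_n -> nat) : FG (ordinal n) -> Prop :=
  ncl (fun z => exists i : 'I_n, z = gpow (fgen i) (m i)).

(* Main.v *)
From HB Require Import structures.
Require Import Defs.
From mathcomp Require Import all_boot zify.
From Stdlib Require Import ZArith Lia.
Set Implicit Arguments. Unset Strict Implicit. Unset Printing Implicit Defensive.

Section FreeGroupFacts.
Variable X : eqType.

Definition canc (a b : letter X) := (a.1 == b.1) && (a.2 != b.2).

Lemma cancE (a b : letter X) : canc a b = (b == flip a).
Proof.
case: a b => [a1 a2] [b1 b2]; rewrite /canc /flip /= xpair_eqE eq_sym.
by case: a2; case: b2.
Qed.

Lemma flipK (a : letter X) : flip (flip a) = a.
Proof. by case: a => a1 a2; rewrite /flip /= negbK. Qed.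

Lemma cons_red_id (a : letter X) w : reducedb (a :: w) -> cons_red a w = a :: w.
Proof. by case: w => [|b w] //= /andP[H _]; rewrite (negbTE H). Qed.

Lemma red_id (w : seq (letter X)) : reducedb w -> red w = w.
Proof.
elim: w => [|a w IH] //= H.
by rewrite IH ?(reducedb_tail H) // cons_red_id.
Qed.

Lemma cons_red_cancel (a : letter X) t : reducedb t -> cons_red (flip a) (cons_red a t) = t.
Proof.
case: t => [|b t] /=.
  by rewrite /flip /= eqxx; case: (a.2).
move=> Hbt.
case: ifP => Hc.
  have Hb : b = flip a by apply/eqP; rewrite -cancE.
  subst b. by rewrite cons_red_id.
by rewrite /= -/(canc (flip a) a) cancE flipK eqxx.
Qed.

Lemma foldr_cons_red_reduced (w u : seq (letter X)) : reducedb w -> reducedb (foldr (@cons_red X) w u).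
Proof. by move=> Hw; elim: u => [|a u IH] //=; apply: cons_red_reduced. Qed.

Lemma fcr (a : letter X) s w : reducedb w ->
  foldr (@cons_red X) w (cons_red a s) = cons_red a (foldr (@cons_red X) w s).
Proof.
move=> Hw; case: s => [|b s] //=.
case: ifP => Hc //=.
have Hb : b = flip a by apply/eqP; rewrite -cancE.
subst b. rewrite -{1}(flipK a) cons_red_cancel //.
exact: foldr_cons_red_reduced.
Qed.

Lemma foldr_red (u w : seq (letter X)) : reducedb w ->
  foldr (@cons_red X) w (red u) = foldr (@cons_red X) w u.
Proof. by move=> Hw; elim: u => [|a u IH] //=; rewrite fcr // IH. Qed.

Lemma red_cat (u v : seq (letter X)) : red (u ++ v) = foldr (@cons_red X) (red v) u.
Proof. by rewrite /red foldr_cat. Qed.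

Lemma red_redl (u v : seq (letter X)) : red (red u ++ v) = red (u ++ v).
Proof. by rewrite !red_cat foldr_red // red_reduced. Qed.

Lemma red_redr (u v : seq (letter X)) : red (u ++ red v) = red (u ++ v).
Proof. by rewrite !red_cat red_id // red_reduced. Qed.

Lemma inv_cancel_l (u t : seq (letter X)) : reducedb t ->
  foldr (@cons_red X) t (map (@flip X) (rev u) ++ u) = t.
Proof.
elim: u t => [|a u IH] t Ht //=.
rewrite rev_cons map_rcons -cats1 -catA /= foldr_cat /=.
rewrite cons_red_cancel ?foldr_cons_red_reduced // -foldr_cat IH //.
Qed.

Lemma inv_cancel_r (u t : seq (letter X)) : reducedb t ->
  foldr (@cons_red X) t (u ++ map (@flip X) (rev u)) = t.
Proof.
elim: u t => [|a u IH] t Ht //=.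
rewrite rev_cons map_rcons -cats1 catA foldr_cat /=.
rewrite IH ?cons_red_reduced //.
by rewrite -{1}(flipK a) cons_red_cancel.
Qed.

End FreeGroupFacts.

Section FGgroup.
Variable X : choiceType.
Definition FGt := FGtype X.
HB.instance Definition _ := [Choice of FGt by <:].

Definition fgmul (u v : FGt) : FGt := @gmul (FG X) u v.
Definition fginv (u : FGt) : FGt := @ginv (FG X) u.
Definition fgone : FGt := @gone (FG X).

Lemma fg_eq (u v : FGt) : proj1_sig u = proj1_sig v -> u = v.
Proof. exact: val_inj. Qed.

Lemma fgmulA : associative fgmul.
Proof.
move=> [u Hu] [v Hv] [w Hw]; apply: fg_eq => /=.
by rewrite red_redl red_redr catA.
Qed.

Lemma fgmul1g : left_id fgone fgmul.
Proof. by move=> [u Hu]; apply: fg_eq => /=; rewrite red_id. Qed.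

Lemma fgmulg1 : right_id fgone fgmul.
Proof. by move=> [u Hu]; apply: fg_eq => /=; rewrite cats0 red_id. Qed.

Lemma fgmulVg : left_inverse fgone fginv fgmul.
Proof.
move=> [u Hu]; apply: fg_eq => /=.
by rewrite red_redl /red inv_cancel_l.
Qed.

Lemma fgmulgV : right_inverse fgone fginv fgmul.
Proof.
move=> [u Hu]; apply: fg_eq => /=.
by rewrite red_redr /red inv_cancel_r.
Qed.

HB.instance Definition _ := isGroup.Build FGt fgmulA fgmul1g fgmulg1 fgmulVg fgmulgV.
End FGgroup.


Local Open Scope group_scope.

Definition grpOf (G : groupType) : grp := @Grp G (@mul G) (@inv G) 1.

Ltac gsimpl := rewrite /commg /conjg;
  rewrite ?(invgM, invgK, mulgA, mulgK, mulgVK, mulgV, mulVg, mulg1, mul1g).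

Section GenTheory.
Variable G : groupType.
Local Notation Gr := (grpOf G).
Implicit Types (S P : G -> Prop) (a b y z g : G).

Lemma gen_ind S P : P 1 -> (forall s y, S s -> P y -> P (s * y)) ->
  (forall s y, S s -> P y -> P (s^-1 * y)) -> forall y, gen (G:=Gr) S y -> P y.
Proof.
move=> P1 Pm Pv y [l [Hl ->]]; elim: l Hl => [|[s b] l IH] /=; first by [].
by move=> [Hs Hl]; case: b; [apply: Pv | apply: Pm] => //; apply: IH.
Qed.

Lemma gen1 S : gen (G:=Gr) S 1.
Proof. by exists [::]. Qed.

Lemma gen_cons S s y : S s -> gen (G:=Gr) S y -> gen (G:=Gr) S (s * y).
Proof. by move=> Hs [l [Hl ->]]; exists ((s, false) :: l). Qed.

Lemma gen_consV S s y : S s -> gen (G:=Gr) S y -> gen (G:=Gr) S (s^-1 * y).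
Proof. by move=> Hs [l [Hl ->]]; exists ((s, true) :: l). Qed.

Lemma gen_mem S s : S s -> gen (G:=Gr) S s.
Proof. by move=> Hs; rewrite -[s]mulg1; apply: gen_cons => //; apply: gen1. Qed.

Lemma gen_mul S y z : gen (G:=Gr) S y -> gen (G:=Gr) S z -> gen (G:=Gr) S (y * z).
Proof.
move=> Hy Hz; move: y Hy.
apply: (@gen_ind S (fun y => gen (G:=Gr) S (y * z))).
- by rewrite mul1g.
- by move=> s y Hs IH; rewrite -mulgA; apply: gen_cons.
- by move=> s y Hs IH; rewrite -mulgA; apply: gen_consV.
Qed.

Lemma gen_inv S y : gen (G:=Gr) S y -> gen (G:=Gr) S y^-1.
Proof.
move: y; apply: (@gen_ind S (fun y => gen (G:=Gr) S y^-1)).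
- by rewrite invg1; apply: gen1.
- move=> s y Hs IH; rewrite invgM; apply: gen_mul => //.
  by rewrite -[s^-1]mulg1; apply: gen_consV => //; apply: gen1.
- move=> s y Hs IH; rewrite invgM invgK; apply: gen_mul => //.
  exact: gen_mem.
Qed.

Lemma gen_sub S (H : G -> Prop) : H 1 -> (forall a b, H a -> H b -> H (a * b)) ->
  (forall a, H a -> H a^-1) -> (forall s, S s -> H s) ->
  forall y, gen (G:=Gr) S y -> H y.
Proof.
move=> H1 Hm Hv HS; apply: gen_ind => // s y Hs Hy.
  by apply: Hm => //; apply: HS.
by apply: Hm => //; apply: Hv; apply: HS.
Qed.

Lemma gen_conj S : (forall s g, S s -> S (s ^ g)) ->
  forall g y, gen (G:=Gr) S y -> gen (G:=Gr) S (y ^ g).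
Proof.
move=> HS g; apply: (@gen_ind S (fun y => gen (G:=Gr) S (y ^ g))).
- by rewrite conj1g; apply: gen1.
- by move=> s y Hs IH; rewrite conjMg; apply: gen_cons => //; apply: HS.
- by move=> s y Hs IH; rewrite conjMg conjVg; apply: gen_consV => //; apply: HS.
Qed.

Definition nsub (H : G -> Prop) :=
  [/\ H 1, (forall a b, H a -> H b -> H (a * b)), (forall a, H a -> H a^-1)
    & (forall a g, H a -> H (a ^ g))].

Lemma gen_nsub S : (forall s g, S s -> S (s ^ g)) -> nsub (gen (G:=Gr) S).
Proof.
move=> HS; split.
- exact: gen1.
- move=> a b; exact: gen_mul.
- move=> a; exact: gen_inv.
- by move=> a g; apply: gen_conj.
Qed.

Lemma gen_commute S : (forall s s', S s -> S s' -> commute s s') ->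
  forall a b, gen (G:=Gr) S a -> gen (G:=Gr) S b -> commute a b.
Proof.
move=> HS.
have H1 : forall s b, S s -> gen (G:=Gr) S b -> commute s b.
  move=> s b Hs; move: b; apply: gen_ind.
  - exact: commute1.
  - by move=> s' y Hs' IH; apply: commuteM => //; apply: HS.
  - by move=> s' y Hs' IH; apply: commuteM => //; apply: commuteV; apply: HS.
move=> a b Ha Hb; move: a Ha; apply: gen_ind.
- exact: commute_sym (commute1 _).
- move=> s y Hs IH; apply: commute_sym; apply: commuteM; apply: commute_sym => //.
  exact: H1.
- move=> s y Hs IH; apply: commute_sym; apply: commuteM; apply: commute_sym => //.
  apply: commute_sym; apply: commuteV; apply: commute_sym; exact: H1.
Qed.

Section Eqm.
Variable H : G -> Prop.
Hypothesis nH : nsub H.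

Definition eqm a b := H (a^-1 * b).

Lemma H1 : H 1. Proof. by case: nH. Qed.
Lemma Hmul a b : H a -> H b -> H (a * b). Proof. by case: nH => _ h _ _; apply: h. Qed.
Lemma Hinv a : H a -> H a^-1. Proof. by case: nH => _ _ h _; apply: h. Qed.
Lemma Hconj a g : H a -> H (a ^ g). Proof. by case: nH => _ _ _ h; apply: h. Qed.

Lemma eqm_refl a : eqm a a. Proof. by rewrite /eqm mulVg; apply: H1. Qed.
Lemma eqm_eq a b : a = b -> eqm a b. Proof. by move=> ->; apply: eqm_refl. Qed.
Lemma eqm_sym a b : eqm a b -> eqm b a.
Proof. by move=> h; have := Hinv h; rewrite invgM invgK. Qed.
Lemma eqm_trans a b c : eqm a b -> eqm b c -> eqm a c.
Proof.
move=> h1 h2; have := Hmul h1 h2.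
by rewrite /eqm -mulgA mulVKg.
Qed.
Lemma eqm_mul a b a' b' : eqm a a' -> eqm b b' -> eqm (a * b) (a' * b').
Proof.
move=> h1 h2; rewrite /eqm.
have -> : (a * b)^-1 * (a' * b') = ((a^-1 * a') ^ b) * (b^-1 * b') by gsimpl.
by apply: Hmul => //; apply: Hconj.
Qed.
Lemma eqm_inv a b : eqm a b -> eqm a^-1 b^-1.
Proof.
move=> h; rewrite /eqm.
have -> : a^-1^-1 * b^-1 = ((a^-1 * b)^-1) ^ b^-1 by gsimpl.
by apply: Hconj; apply: Hinv.
Qed.
Lemma eqm_conj a b g : eqm a b -> eqm (a ^ g) (b ^ g).
Proof. by move=> h; rewrite /eqm -conjVg -conjMg; apply: Hconj. Qed.
Lemma eqm_mulr a b b' : eqm b b' -> eqm (a * b) (a * b').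
Proof. by move=> h; apply: eqm_mul => //; apply: eqm_refl. Qed.
Lemma eqm_mull a a' b : eqm a a' -> eqm (a * b) (a' * b).
Proof. by move=> h; apply: eqm_mul => //; apply: eqm_refl. Qed.
Lemma eqm_inv_r a b : eqm 1 (a * b) -> eqm a b^-1.
Proof.
move=> h.
have h2 : eqm (a * b * b^-1) (1 * b^-1) by apply: eqm_mull; apply: eqm_sym.
by rewrite mulgK mul1g in h2.
Qed.
Lemma eqm_in a b : H b -> eqm (a * b) a.
Proof. by move=> h; rewrite /eqm invgM -mulgA mulVg mulg1; apply: Hinv. Qed.
Lemma eqm_1 a : eqm a 1 -> H a.
Proof. by rewrite /eqm mulg1 => h; rewrite -[a]invgK; apply: Hinv. Qed.

Definition cen a := forall g, eqm (a * g) (g * a).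

Lemma prodM_eqm (I : Type) (s : seq I) (F F' : I -> G) :
  (forall i, cen (F' i)) ->
  eqm (\prod_(i <- s) (F i * F' i)) ((\prod_(i <- s) F i) * \prod_(i <- s) F' i).
Proof.
move=> hc; elim: s => [|i s IH]; first by rewrite !big_nil mulg1; apply: eqm_refl.
rewrite !big_cons.
apply: eqm_trans (eqm_mulr _ IH) _.
rewrite -!mulgA; apply: eqm_mulr; rewrite !mulgA; apply: eqm_mull.
exact: hc.
Qed.

End Eqm.
End GenTheory.

Section Powz.
Variable G : groupType.
Implicit Types (a b g : G).

Definition powz a (z : Z) : G :=
  if (0 <=? z)%Z then a ^+ Z.to_nat z else (a ^+ Z.to_nat (- z))^-1.

Lemma Zcases (z : Z) : exists k, z = Z.of_nat k \/ z = (- Z.of_nat k)%Z.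
Proof. exists (Z.to_nat (Z.abs z)); lia. Qed.

Lemma powz_nat a k : powz a (Z.of_nat k) = a ^+ k.
Proof.
rewrite /powz; have -> : (0 <=? Z.of_nat k)%Z = true by apply/Z.leb_le; lia.
by rewrite Nat2Z.id.
Qed.

Lemma powz_negnat a k : powz a (- Z.of_nat k) = (a ^+ k)^-1.
Proof.
case: k => [|k]; first by rewrite /powz /= invg1.
rewrite /powz; have -> : (0 <=? - Z.of_nat k.+1)%Z = false by apply/Z.leb_gt; lia.
by rewrite Z.opp_involutive Nat2Z.id.
Qed.

Lemma powz0 a : powz a 0 = 1. Proof. by []. Qed.
Lemma powz1 a : powz a 1 = a. Proof. by []. Qed.

Lemma powzS a z : powz a (z + 1) = powz a z * a.
Proof.
case: (Zcases z) => k [->|->].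
  have -> : (Z.of_nat k + 1)%Z = Z.of_nat k.+1 by lia.
  by rewrite !powz_nat expgSr.
case: k => [|k]; first by rewrite /= mul1g.
have -> : (- Z.of_nat k.+1 + 1)%Z = (- Z.of_nat k)%Z by lia.
by rewrite !powz_negnat expgS invgM mulgVK.
Qed.

Lemma powzP a z : powz a (z - 1) = powz a z * a^-1.
Proof. by have := powzS a (z - 1); rewrite Z.sub_add => ->; rewrite mulgK. Qed.

Lemma powzD a z w : powz a (z + w) = powz a z * powz a w.
Proof.
induction w using Z.peano_ind.
- by rewrite Z.add_0_r powz0 mulg1.
- by rewrite -Z.add_1_r Z.add_assoc !powzS IHw mulgA.
- by rewrite -Z.sub_1_r Z.add_sub_assoc !powzP IHw mulgA.
Qed.

Lemma powzN a z : powz a (- z) = (powz a z)^-1.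
Proof.
case: (Zcases z) => k [->|->]; first by rewrite powz_negnat powz_nat.
by rewrite Z.opp_involutive powz_nat powz_negnat invgK.
Qed.

Lemma powzM a z w : powz a (z * w) = powz (powz a z) w.
Proof.
induction w using Z.peano_ind.
- by rewrite Z.mul_0_r.
- by rewrite -Z.add_1_r Z.mul_add_distr_l Z.mul_1_r powzD IHw powzS.
- rewrite -Z.sub_1_r Z.mul_sub_distr_l Z.mul_1_r -Z.add_opp_r powzD IHw powzN.
  by rewrite -/(Z.sub w 1) powzP.
Qed.

Lemma powz1g z : powz (1 : G) z = 1.
Proof.
by case: (Zcases z) => k [->|->]; rewrite ?powz_nat ?powz_negnat expg1n ?invg1.
Qed.

Lemma powz_conj a g z : (powz a z) ^ g = powz (a ^ g) z.
Proof.
by case: (Zcases z) => k [->|->]; rewrite ?powz_nat ?powz_negnat ?conjVg conjXg.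
Qed.

Lemma nsub_powz (H : G -> Prop) a z : nsub H -> H a -> H (powz a z).
Proof.
move=> nH Ha.
have hn : forall k, H (a ^+ k).
  elim=> [|k IH]; first exact: H1.
  by rewrite expgS; apply: Hmul.
by case: (Zcases z) => k [->|->]; rewrite ?powz_nat ?powz_negnat //; apply: Hinv.
Qed.

Section PowzEqm.
Variable H : G -> Prop.
Hypothesis nH : nsub H.

Lemma eqm_powz a b z : eqm H a b -> eqm H (powz a z) (powz b z).
Proof.
move=> h.
have hn : forall k, eqm H (a ^+ k) (b ^+ k).
  elim=> [|k IH]; first exact: eqm_refl.
  by rewrite !expgS; apply: eqm_mul.
by case: (Zcases z) => k [->|->]; rewrite ?powz_nat ?powz_negnat //; apply: eqm_inv.
Qed.

Variable P : G -> Prop.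
Hypothesis nP : nsub P.
Hypothesis Pcen : forall b, P b -> cen H b.

Lemma cen_powz_mul a b z : P b ->
  eqm H (powz (a * b) z) (powz a z * powz b z).
Proof.
move=> Pb.
have hn : forall k, eqm H ((a * b) ^+ k) (a ^+ k * b ^+ k).
  elim=> [|k IH]; first by rewrite !expg0 mulg1; apply: eqm_refl.
  rewrite !expgS; apply: eqm_trans (eqm_mulr _ _ IH) _ => //.
  rewrite -!mulgA; apply: eqm_mulr => //; rewrite !mulgA; apply: eqm_mull => //.
  by apply: Pcen.
case: (Zcases z) => k [->|->]; rewrite ?powz_nat ?powz_negnat //.
apply: eqm_trans (eqm_inv nH (hn k)) _ => //.
rewrite invgM; apply: Pcen.
apply: Hinv => //; by rewrite -powz_nat; apply: nsub_powz.
Qed.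

End PowzEqm.
End Powz.

Definition H3 := (Z * Z * Z)%type.
Definition hm (p q : H3) : H3 :=
  let '(a1, b1, c1) := p in let '(a2, b2, c2) := q in
  (a1 + a2, b1 + b2, c1 + c2 + a1 * b2)%Z.
Lemma hmE a1 b1 c1 a2 b2 c2 : hm (a1, b1, c1) (a2, b2, c2) =
  (a1 + a2, b1 + b2, c1 + c2 + a1 * b2)%Z.
Proof. by []. Qed.

Definition bZ (b : bool) : Z := if b then 1%Z else 0%Z.

Lemma prod1 (G : groupType) (I : eqType) (s : seq I) (F : I -> G) :
  (forall i, i \in s -> F i = 1) -> \prod_(i <- s) F i = 1.
Proof.
elim: s => [|a s IH] h; first by rewrite big_nil.
rewrite big_cons h ?mem_head // mul1g IH // => i hi.
by apply: h; rewrite in_cons hi orbT.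
Qed.

Lemma prod_single (G : groupType) (I : eqType) (s : seq I) (F : I -> G) i0 :
  uniq s -> i0 \in s -> (forall i, i != i0 -> F i = 1) ->
  \prod_(i <- s) F i = F i0.
Proof.
elim: s => [|a s IH] //= /andP[ha hs]; rewrite in_cons big_cons => hin hF.
case: (eqVneq a i0) => [E|hne].
  subst a; rewrite prod1 ?mulg1 // => i hi; apply: hF.
  by apply: contraNneq ha => <-.
have hin' : i0 \in s by move: hin; rewrite eq_sym (negbTE hne).
by rewrite hF // mul1g IH.
Qed.

Section Main.
Variable G : groupType.
Local Notation Gr := (grpOf G).
Variable n : nat.
Variable m : 'I_n -> nat.
Variable x : 'I_n -> G.
Hypothesis m_gt0 : forall i, 0 < m i.
Hypothesis m_cop : forall i j, i != j -> coprime (m i) (m j).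
Hypothesis gen_all : forall g, gen (G:=Gr) (fun z => exists j, z = x j) g.
Variable psi : 'I_n -> 'I_n -> G -> H3.
Hypothesis psiM : forall i j a b, psi i j (a * b) = hm (psi i j a) (psi i j b).
Hypothesis psiX : forall i j l, psi i j (x l) = (bZ (l == i), bZ (l == j), 0%Z).

Implicit Types (a b g h y : G).

Definition S0 : G -> Prop := fun z => exists i, z = gpow (G:=Gr) (x i) (m i).
Definition RR := ncl (G:=Gr) S0.
Definition KK := itcomm (G:=Gr) RR 1.
Definition NN := itcomm (G:=Gr) RR 2.
Definition r i : G := x i ^+ m i.

Lemma rE i : gpow (G:=Gr) (x i) (m i) = r i.
Proof. exact: iter_mulg_1. Qed.

Lemma RR_gen i h : RR (r i ^ h).
Proof. by apply: gen_mem; exists (r i), h; split => //; exists i; rewrite rE. Qed.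

Lemma RR_r i : RR (r i).
Proof. by rewrite -[r i]conjg1; apply: RR_gen. Qed.

Lemma KK_gen a g : RR a -> KK [~ a, g].
Proof. by move=> Ha; apply: gen_mem; exists a, g. Qed.

Lemma NN_gen a g : KK a -> NN [~ a, g].
Proof. by move=> Ha; apply: gen_mem; exists a, g. Qed.

Lemma nRR : nsub RR.
Proof.
apply: gen_nsub => s g [s0 [h [Hs ->]]]; exists s0, (h * g); split => //.
by symmetry; exact: conjgM.
Qed.

Lemma nKK : nsub KK.
Proof.
apply: gen_nsub => s g [a [b [Ha [_ ->]]]]; exists (a ^ g), (b ^ g).
by split; [exact: (Hconj nRR g Ha) | split => //; exact: conjRg].
Qed.

Lemma nNN : nsub NN.
Proof.
apply: gen_nsub => s g [a [b [Ha [_ ->]]]]; exists (a ^ g), (b ^ g).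
by split; [exact: (Hconj nKK g Ha) | split => //; exact: conjRg].
Qed.

Lemma cenK y : RR y -> cen KK y.
Proof.
move=> Hy g; rewrite /eqm.
have -> : (y * g)^-1 * (g * y) = [~ y, g]^-1 by rewrite invgR invgM -mulgA.
by apply: (Hinv nKK); apply: KK_gen.
Qed.

Lemma cenN y : KK y -> cen NN y.
Proof.
move=> Hy g; rewrite /eqm.
have -> : (y * g)^-1 * (g * y) = [~ y, g]^-1 by rewrite invgR invgM -mulgA.
by apply: (Hinv nNN); apply: NN_gen.
Qed.

Lemma commMr a g h : [~ a, g * h] = [~ a, h] * [~ a, g] ^ h.
Proof. by gsimpl. Qed.
Lemma commMl a b g : [~ a * b, g] = [~ a, g] ^ b * [~ b, g].
Proof. by gsimpl. Qed.
Lemma conj_comm a h : a ^ h = a * [~ a, h].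
Proof. by rewrite /commg mulVKg. Qed.

Lemma eqmN_conj k h : KK k -> eqm NN (k ^ h) k.
Proof. by move=> Hk; apply: (eqm_sym nNN); apply: NN_gen. Qed.

Lemma comm_mulr a g h : RR a -> eqm NN [~ a, g * h] ([~ a, g] * [~ a, h]).
Proof.
move=> Ha; rewrite commMr.
apply: (eqm_trans nNN (eqm_mulr nNN _ (eqmN_conj _ (KK_gen _ Ha)))).
by apply: (eqm_sym nNN); apply: cenN; apply: KK_gen.
Qed.

Lemma comm_mull a b g : RR a -> eqm NN [~ a * b, g] ([~ a, g] * [~ b, g]).
Proof.
move=> Ha; rewrite commMl; apply: (eqm_mull nNN).
exact: eqmN_conj (KK_gen _ Ha).
Qed.

Lemma comm_pow a g k : RR a -> eqm NN [~ a, g ^+ k] ([~ a, g] ^+ k).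
Proof.
move=> Ha; elim: k => [|k IH]; first by rewrite !expg0 commg1; apply: eqm_refl nNN _.
rewrite !expgS; apply: (eqm_trans nNN (comm_mulr _ _ Ha)).
by apply: (eqm_mulr nNN).
Qed.

Definition c i j : G := [~ r i, x j].

Lemma c_diag i : c i i = 1.
Proof. by rewrite /c /r -invgR commgXg invg1. Qed.

Lemma c_K i j : KK (c i j).
Proof. exact: KK_gen (RR_r i). Qed.

Lemma c_rel i j :
  eqm NN (powz (c i j) (Z.of_nat (m j))) (powz (c j i) (- Z.of_nat (m i))).
Proof.
rewrite powz_nat powz_negnat.
apply: (eqm_trans nNN (eqm_sym nNN (comm_pow _ _ (RR_r i)))).
have -> : [~ r i, x j ^+ m j] = [~ r j, x i ^+ m i]^-1 by rewrite invgR.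
by apply: (eqm_inv nNN); apply: comm_pow; apply: RR_r.
Qed.

Lemma c_rel' i j :
  eqm NN (powz (c i j) (- Z.of_nat (m j))) (powz (c j i) (Z.of_nat (m i))).
Proof.
have -> : powz (c j i) (Z.of_nat (m i)) = (powz (c j i) (- Z.of_nat (m i)))^-1.
  by rewrite powzN invgK.
rewrite powzN; by apply: (eqm_inv nNN); apply: c_rel.
Qed.

Definition bzv i j := Z.of_nat (egcdn (m i) (m j)).1.
Definition bzw i j := Z.of_nat (egcdn (m i) (m j)).2.

Lemma bzE i j : i != j ->
  (bzv i j * Z.of_nat (m i) - bzw i j * Z.of_nat (m j) = 1)%Z.
Proof.
move=> hij; rewrite /bzv /bzw.
case: (egcdnP (m j) (m_gt0 i)) => km kn Hk _ /=.
have := m_cop hij; rewrite /coprime => /eqP Hg; rewrite Hg in Hk.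
lia.
Qed.

Definition t (i j : 'I_n) : G :=
  if i < j then powz (c i j) (bzv i j) * powz (c j i) (bzw i j) else 1.

Lemma t_K i j : KK (t i j).
Proof.
rewrite /t; case: ifP => _; last exact: H1 nKK.
by apply: (Hmul nKK); apply: (nsub_powz _ nKK); apply: c_K.
Qed.

Lemma tE (i j : 'I_n) : i < j ->
  t i j = powz (c i j) (bzv i j) * powz (c j i) (bzw i j).
Proof. by rewrite /t => ->. Qed.

Lemma ltn_neq (i j : 'I_n) : i < j -> i != j.
Proof. by move=> h; apply: contraTneq h => ->; rewrite ltnn. Qed.

Lemma t_pow1 (i j : 'I_n) : i < j -> eqm NN (c i j) (powz (t i j) (Z.of_nat (m i))).
Proof.
move=> hij; rewrite tE //; apply: (eqm_sym nNN).
apply: (eqm_trans nNN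
  (cen_powz_mul nNN nKK cenN _ _ (nsub_powz _ nKK (c_K j i)))).
rewrite -!powzM (Z.mul_comm (bzw i j)) [powz (c j i) _]powzM.
apply: (eqm_trans nNN (eqm_mulr nNN _ (eqm_powz nNN _ (c_rel j i)))).
rewrite -powzM -powzD.
have -> : (bzv i j * Z.of_nat (m i) + - Z.of_nat (m j) * bzw i j)%Z = 1%Z.
  by have := bzE (ltn_neq hij); lia.
by rewrite powz1; apply: eqm_refl nNN _.
Qed.

Lemma t_pow2 (i j : 'I_n) : i < j -> eqm NN (c j i) (powz (t i j) (- Z.of_nat (m j))).
Proof.
move=> hij; rewrite tE //; apply: (eqm_sym nNN).
apply: (eqm_trans nNN
  (cen_powz_mul nNN nKK cenN _ _ (nsub_powz _ nKK (c_K j i)))).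
rewrite -!powzM (Z.mul_comm (bzv i j)) [powz (c i j) _]powzM.
apply: (eqm_trans nNN (eqm_mull nNN _ (eqm_powz nNN _ (c_rel' i j)))).
rewrite -powzM -powzD.
have -> : (Z.of_nat (m i) * bzv i j + bzw i j * - Z.of_nat (m j))%Z = 1%Z.
  by have := bzE (ltn_neq hij); lia.
by rewrite powz1; apply: eqm_refl nNN _.
Qed.


Definition pairs : seq ('I_n * 'I_n) := enum {: 'I_n * 'I_n}.

Definition D (k : 'I_n -> 'I_n -> Z) : G :=
  \prod_(p <- pairs) powz (t p.1 p.2) (k p.1 p.2).

Lemma D_ext k k' : (forall i j, k i j = k' i j) -> D k = D k'.
Proof. by move=> h; rewrite /D; apply: eq_bigr => p _; rewrite h. Qed.

Lemma D0 : D (fun _ _ => 0%Z) = 1.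
Proof. by rewrite /D prod1. Qed.

Lemma tpow_cen p z : cen NN (powz (t p.1 p.2) z).
Proof. by apply: cenN; apply: (nsub_powz _ nKK); apply: t_K. Qed.

Lemma DM k k' : eqm NN (D k * D k') (D (fun i j => k i j + k' i j)%Z).
Proof.
apply: (eqm_sym nNN); rewrite /D.
under eq_bigr => p _ do rewrite powzD.
by apply: (prodM_eqm nNN) => p; apply: tpow_cen.
Qed.

Definition Dsgl (i j : 'I_n) (z : Z) := fun u v : 'I_n => if (u == i) && (v == j) then z else 0%Z.

Lemma Dsingle i j z : D (Dsgl i j z) = powz (t i j) z.
Proof.
rewrite /D (@prod_single _ _ _ _ (i, j)) ?enum_uniq ?mem_enum //=.
  by rewrite /Dsgl !eqxx.
move=> [u v] hne /=; rewrite /Dsgl; case: ifP => // /andP [/eqP ha /eqP hb].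
by subst; rewrite eqxx in hne.
Qed.

Lemma DM' y z k1 k2 : eqm NN y (D k1) -> eqm NN z (D k2) ->
  eqm NN (y * z) (D (fun i j => k1 i j + k2 i j)%Z).
Proof.
move=> h1 h2; apply: (eqm_trans nNN (eqm_mul nNN h1 h2)); exact: DM.
Qed.

Lemma DV' y k : eqm NN y (D k) -> eqm NN y^-1 (D (fun i j => - k i j)%Z).
Proof.
move=> h; apply: (eqm_trans nNN (eqm_inv nNN h)); apply: (eqm_sym nNN).
rewrite -[D (fun i j => - k i j)%Z]mulg1 -[X in _ * X](mulgV (D k)) mulgA.
apply: (eqm_trans nNN (eqm_mull nNN _ (DM _ _))).
rewrite (@D_ext _ (fun _ _ => 0%Z)) ?D0 ?mul1g; first exact: eqm_refl nNN _.
by move=> i j; lia.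
Qed.

Lemma c_D i j : exists k, eqm NN (c i j) (D k).
Proof.
case: (ltngtP i j) => h.
- by exists (Dsgl i j (Z.of_nat (m i))); rewrite Dsingle; apply: t_pow1.
- by exists (Dsgl j i (- Z.of_nat (m i))); rewrite Dsingle; apply: t_pow2.
- have E : i = j by apply: val_inj.
  by subst; exists (fun _ _ => 0%Z); rewrite c_diag D0; apply: eqm_refl nNN _.
Qed.

Lemma comm_r_D i g : exists k, eqm NN [~ r i, g] (D k).
Proof.
have := gen_all g; move: g.
apply: (@gen_ind _ _ (fun g => exists k, eqm NN [~ r i, g] (D k))).
- by exists (fun _ _ => 0%Z); rewrite commg1 D0; apply: eqm_refl nNN _.
- move=> s y [j ->] [k IH]; have [k1 h1] := c_D i j.
  exists (fun u v => k1 u v + k u v)%Z.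
  apply: (eqm_trans nNN (comm_mulr _ _ (RR_r i))).
  exact: DM' h1 IH.
- move=> s y [j ->] [k IH]; have [k1 h1] := c_D i j.
  exists (fun u v => - k1 u v + k u v)%Z.
  apply: (eqm_trans nNN (comm_mulr _ _ (RR_r i))).
  apply: DM' IH.
  have h2 : eqm NN [~ r i, (x j)^-1] (c i j)^-1.
    apply: (eqm_inv_r nNN).
    have := comm_mulr (x j)^-1 (x j) (RR_r i).
    by rewrite mulVg commg1.
  apply: (eqm_trans nNN h2); exact: DV'.
Qed.

Lemma comm_conj_r i h g : eqm NN [~ r i ^ h, g] [~ r i, g].
Proof.
rewrite conj_comm.
apply: (eqm_trans nNN (comm_mull _ _ (RR_r i))).
by apply: (eqm_in nNN); apply: NN_gen; apply: KK_gen; apply: RR_r.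
Qed.

Lemma comm_R_D y g : RR y -> exists k, eqm NN [~ y, g] (D k).
Proof.
move: y; apply: (@gen_ind _ _ (fun y => exists k, eqm NN [~ y, g] (D k))).
- by exists (fun _ _ => 0%Z); rewrite comm1g D0; apply: eqm_refl nNN _.
- move=> s y [s0 [h [[i ->] ->]]] [k IH].
  have -> : gconj (G:=Gr) (gpow (G:=Gr) (x i) (m i)) h = r i ^ h by rewrite rE.
  have [k1 h1] := comm_r_D i g.
  exists (fun u v => k1 u v + k u v)%Z.
  apply: (eqm_trans nNN (comm_mull _ _ (RR_gen i h))).
  apply: DM' IH.
  exact: (eqm_trans nNN (comm_conj_r i h g)).
- move=> s y [s0 [h [[i ->] ->]]] [k IH].
  have -> : gconj (G:=Gr) (gpow (G:=Gr) (x i) (m i)) h = r i ^ h by rewrite rE.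
  have [k1 h1] := comm_r_D i g.
  exists (fun u v => - k1 u v + k u v)%Z.
  apply: (eqm_trans nNN (comm_mull _ _ (Hinv nRR (RR_gen i h)))).
  apply: DM' IH.
  have h2 : eqm NN [~ (r i ^ h)^-1, g] [~ r i ^ h, g]^-1.
    apply: (eqm_inv_r nNN).
    have := comm_mull (r i ^ h) g (Hinv nRR (RR_gen i h)).
    by rewrite mulVg comm1g.
  apply: (eqm_trans nNN h2); apply: DV'.
  exact: (eqm_trans nNN (comm_conj_r i h g)).
Qed.

Lemma KK_D y : KK y -> exists k, eqm NN y (D k).
Proof.
move: y; apply: (@gen_ind _ _ (fun y => exists k, eqm NN y (D k))).
- by exists (fun _ _ => 0%Z); rewrite D0; apply: eqm_refl nNN _.
- move=> s y [a [b [Ha [_ ->]]]] [k IH].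
  have [k1 h1] := comm_R_D b Ha.
  by exists (fun i j => k1 i j + k i j)%Z; apply: DM'.
- move=> s y [a [b [Ha [_ ->]]]] [k IH].
  have [k1 h1] := comm_R_D b Ha.
  by exists (fun i j => - k1 i j + k i j)%Z; apply: DM' => //; apply: DV'.
Qed.

Definition Q (e : 'I_n -> Z) : G := \prod_(l <- enum 'I_n) powz (r l) (e l).

Lemma rpow_cen l z : cen KK (powz (r l) z).
Proof. by apply: cenK; apply: (nsub_powz _ nRR); apply: RR_r. Qed.

Lemma Q_ext e e' : (forall i, e i = e' i) -> Q e = Q e'.
Proof. by move=> h; rewrite /Q; apply: eq_bigr => l _; rewrite h. Qed.

Lemma QM e e' : eqm KK (Q e * Q e') (Q (fun i => e i + e' i)%Z).
Proof.
apply: (eqm_sym nKK); rewrite /Q.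
under eq_bigr => p _ do rewrite powzD.
by apply: (prodM_eqm nKK) => p; apply: rpow_cen.
Qed.

Lemma Qsingle i z : Q (fun l => if l == i then z else 0%Z) = powz (r i) z.
Proof.
rewrite /Q (@prod_single _ _ _ _ i) ?enum_uniq ?mem_enum //= ?eqxx //.
by move=> l hne; rewrite (negbTE hne).
Qed.

Lemma Q1 e : (forall i, e i = 0%Z) -> Q e = 1.
Proof. by move=> h; rewrite /Q prod1 // => l _; rewrite h. Qed.

Lemma QM' y z e1 e2 : eqm KK y (Q e1) -> eqm KK z (Q e2) ->
  eqm KK (y * z) (Q (fun i => e1 i + e2 i)%Z).
Proof.
move=> h1 h2; apply: (eqm_trans nKK (eqm_mul nKK h1 h2)); exact: QM.
Qed.

Lemma RR_Q y : RR y -> exists e, eqm KK y (Q e).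
Proof.
move: y; apply: (@gen_ind _ _ (fun y => exists e, eqm KK y (Q e))).
- by exists (fun _ => 0%Z); rewrite Q1 //; apply: eqm_refl nKK _.
- move=> s y [s0 [h [[i ->] ->]]] [e IH].
  have -> : gconj (G:=Gr) (gpow (G:=Gr) (x i) (m i)) h = r i ^ h by rewrite rE.
  exists (fun l => (if l == i then 1 else 0) + e l)%Z; apply: QM' IH.
  rewrite Qsingle powz1; apply: (eqm_sym nKK); exact: KK_gen (RR_r i).
- move=> s y [s0 [h [[i ->] ->]]] [e IH].
  have -> : gconj (G:=Gr) (gpow (G:=Gr) (x i) (m i)) h = r i ^ h by rewrite rE.
  exists (fun l => (if l == i then (-1)%Z else 0%Z) + e l)%Z; apply: QM' IH.
  rewrite Qsingle; have -> : powz (r i) (-1)%Z = (r i)^-1 by [].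
  apply: (eqm_inv nKK).
  apply: (eqm_sym nKK); exact: KK_gen (RR_r i).
Qed.

Lemma psi1 i j : psi i j 1 = (0%Z, 0%Z, 0%Z).
Proof.
have := psiM i j 1 1; rewrite mulg1.
case: (psi i j 1) => [[a b] c] /= [ha hb hc].
have a0 : a = 0%Z by lia.
have b0 : b = 0%Z by lia.
subst; f_equal; lia.
Qed.

Lemma psiV i j a : psi i j a^-1 =
  let '(a1, b1, c1) := psi i j a in (- a1, - b1, - c1 + a1 * b1)%Z.
Proof.
have := psiM i j a^-1 a; rewrite mulVg psi1.
case: (psi i j a^-1) => [[a' b'] c']; case: (psi i j a) => [[a1 b1] c1] /=.
move=> [h1 h2 h3].
have -> : a' = (- a1)%Z by lia.
have -> : b' = (- b1)%Z by lia.
f_equal; nia.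
Qed.

Lemma psiC i j a b : psi i j [~ a, b] =
  (0%Z, 0%Z, (psi i j a).1.1 * (psi i j b).1.2 - (psi i j b).1.1 * (psi i j a).1.2)%Z.
Proof.
rewrite /commg /conjg !psiM !psiV.
case: (psi i j a) => [[a1 b1] c1]; case: (psi i j b) => [[a2 b2] c2] /=.
f_equal; [f_equal|]; ring.
Qed.

Definition Z2 i j y := (psi i j y).1.1 = 0%Z /\ (psi i j y).1.2 = 0%Z.
Definition Ker i j y := psi i j y = (0%Z, 0%Z, 0%Z).

Lemma commsub_Z2 i j A B y : commsub (G:=Gr) A B y -> Z2 i j y.
Proof.
move: y; apply: gen_sub.
- by rewrite /Z2 psi1.
- move=> a b; rewrite /Z2 psiM.
  case: (psi i j a) => [[a1 b1] c1]; case: (psi i j b) => [[a2 b2] c2] /=; lia.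
- move=> a; rewrite /Z2 psiV.
  case: (psi i j a) => [[a1 b1] c1] /=; lia.
- by move=> s [a [b [_ [_ ->]]]]; rewrite /Z2 psiC.
Qed.

Lemma commsub_Ker i j A B y : (forall a, A a -> Z2 i j a) ->
  commsub (G:=Gr) A B y -> Ker i j y.
Proof.
move=> hA; move: y; apply: gen_sub.
- by rewrite /Ker psi1.
- by move=> a b; rewrite /Ker psiM => -> ->.
- by move=> a; rewrite /Ker psiV => ->.
- move=> s [a [b [Ha [_ ->]]]]; rewrite /Ker psiC.
  have [h1 h2] := hA a Ha; rewrite h1 h2; f_equal; lia.
Qed.

Lemma KK_Z2 i j y : KK y -> Z2 i j y.
Proof. exact: commsub_Z2. Qed.

Lemma NN_Ker i j y : NN y -> Ker i j y.
Proof. by apply: commsub_Ker => a; apply: KK_Z2. Qed.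

Lemma gamma3_Ker i j y : gamma (G:=Gr) 3 y -> Ker i j y.
Proof. by apply: commsub_Ker => a; apply: commsub_Z2. Qed.

Lemma psi_mul1 i j a b : (psi i j (a * b)).1.1 = ((psi i j a).1.1 + (psi i j b).1.1)%Z.
Proof.
by rewrite psiM; case: (psi i j a) => [[a1 b1] c1]; case: (psi i j b) => [[a2 b2] c2].
Qed.

Lemma psi_inv1 i j a : (psi i j a^-1).1.1 = (- (psi i j a).1.1)%Z.
Proof. by rewrite psiV; case: (psi i j a) => [[a1 b1] c1]. Qed.

Lemma psi_powz1 i j a z : (psi i j (powz a z)).1.1 = (z * (psi i j a).1.1)%Z.
Proof.
have hn : forall k, (psi i j (a ^+ k)).1.1 = (Z.of_nat k * (psi i j a).1.1)%Z.
  elim=> [|k IH]; first by rewrite expg0 psi1.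
  rewrite expgS psi_mul1 IH; lia.
case: (Zcases z) => k [->|->]; rewrite ?powz_nat ?powz_negnat ?psi_inv1 hn; lia.
Qed.

Lemma psi_r1 i l : (psi i i (r l)).1.1 = (Z.of_nat (m l) * bZ (l == i))%Z.
Proof.
rewrite /r -powz_nat psi_powz1 psiX //.
Qed.

Lemma psi_Q1 i e : (psi i i (Q e)).1.1 = (e i * Z.of_nat (m i))%Z.
Proof.
rewrite /Q.
have : uniq (enum 'I_n) by apply: enum_uniq.
have : i \in enum 'I_n by rewrite mem_enum.
elim: (enum 'I_n) => [|l s IH] //= hin /andP [hl hs].
rewrite big_cons psi_mul1 psi_powz1 psi_r1.
move: hin; rewrite in_cons; case: (eqVneq i l) => [E|hne] /= hin.
  subst l; rewrite ?eqxx /=.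
  have -> : (psi i i (\prod_(j <- s) powz (r j) (e j))).1.1 = 0%Z.
    elim: s hl {IH hs} => [|l' s' IH'] /=; first by rewrite big_nil psi1.
    rewrite in_cons negb_or => /andP [hl' hs'].
    rewrite big_cons psi_mul1 psi_powz1 psi_r1 IH' //.
    by rewrite eq_sym in hl'; rewrite (negbTE hl') /=; lia.
  lia.
rewrite IH //; lia.
Qed.

Lemma eqm_psi1 (H : G -> Prop) i y z : (forall w, H w -> Z2 i i w) ->
  eqm H y z -> (psi i i y).1.1 = (psi i i z).1.1.
Proof.
move=> hH h; have [h1 _] := hH _ h.
by move: h1; rewrite psi_mul1 psi_inv1; lia.
Qed.

Lemma step1 y : RR y -> gamma (G:=Gr) 3 y -> KK y.
Proof.
move=> Hy Hg; have [e he] := RR_Q Hy.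
have e0 : forall i, e i = 0%Z.
  move=> i; have := eqm_psi1 (@KK_Z2 i i) he.
  rewrite psi_Q1 (gamma3_Ker i i Hg) /=.
  by have := m_gt0 i; nia.
rewrite (Q1 e0) in he; exact: (eqm_1 nKK he).
Qed.

Lemma psi_powz_c i j a z s : psi i j a = (0%Z, 0%Z, s) ->
  psi i j (powz a z) = (0%Z, 0%Z, z * s)%Z.
Proof.
move=> ha.
have hn : forall k, psi i j (a ^+ k) = (0%Z, 0%Z, Z.of_nat k * s)%Z.
  elim=> [|k IH]; first by rewrite expg0 psi1.
  rewrite expgS psiM IH ha hmE; congr (_, _, _); lia.
case: (Zcases z) => k [->|->]; rewrite ?powz_nat ?powz_negnat ?psiV hn //.
rewrite /=; congr (_, _, _); lia.
Qed.

Lemma psi_r12 i j l : (psi i j (r l)).1.1 = (Z.of_nat (m l) * bZ (l == i))%Z /\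
  (psi i j (r l)).1.2 = (Z.of_nat (m l) * bZ (l == j))%Z.
Proof.
have hn : forall k, (psi i j (x l ^+ k)).1.1 = (Z.of_nat k * bZ (l == i))%Z /\
  (psi i j (x l ^+ k)).1.2 = (Z.of_nat k * bZ (l == j))%Z.
  elim=> [|k [IH1 IH2]]; first by rewrite expg0 psi1.
  rewrite expgS psiM; move: IH1 IH2; rewrite psiX.
  case: (psi i j (x l ^+ k)) => [[a1 b1] c1]; rewrite hmE; simpl fst; simpl snd.
  move=> -> ->; split; lia.
exact: hn.
Qed.

Lemma psi_c (i j p q : 'I_n) : psi i j (c p q) = (0%Z, 0%Z,
  Z.of_nat (m p) * (bZ (p == i) * bZ (q == j) - bZ (q == i) * bZ (p == j)))%Z.
Proof.
rewrite /c psiC psiX /=; have [-> ->] := psi_r12 i j p; f_equal; ring.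
Qed.

Lemma psi_t (i j p q : 'I_n) : i < j ->
  psi i j (t p q) = (0%Z, 0%Z, bZ ((p == i) && (q == j))).
Proof.
move=> hij; rewrite /t; case: ifP => hpq; last first.
  rewrite psi1; case/boolP: ((p == i) && (q == j)) => // /andP [/eqP hp /eqP hq].
  by subst; rewrite hij in hpq.
rewrite psiM (psi_powz_c _ (psi_c i j p q)) (psi_powz_c _ (psi_c i j q p)) /=.
have hb := bzE (ltn_neq hpq).
congr (_, _, _).
rewrite /bZ; case: (eqVneq p i) => [E1|N1]; case: (eqVneq q j) => [E2|N2];
  case: (eqVneq q i) => [E3|N3]; case: (eqVneq p j) => [E4|N4] /=;
  subst; lia.
Qed.

Lemma psi_D (i j : 'I_n) k : i < j -> psi i j (D k) = (0%Z, 0%Z, k i j).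
Proof.
move=> hij; rewrite /D.
have : uniq pairs by apply: enum_uniq.
have : (i, j) \in pairs by rewrite mem_enum.
elim: pairs => [|[p q] s IH] //= hin /andP [hl hs].
rewrite big_cons psiM (psi_powz_c _ (psi_t p q hij)).
move: hin; rewrite in_cons; case: (eqVneq (i, j) (p, q)) => [E|hne] /= hin.
  case: E => Ep Eq; rewrite -Ep -Eq in hl *; rewrite !eqxx /=.
  have -> : psi i j (\prod_(u <- s) powz (t u.1 u.2) (k u.1 u.2)) = (0%Z, 0%Z, 0%Z).
    elim: s hl {IH hs} => [|[p' q'] s' IH'] /=; first by rewrite big_nil psi1.
    rewrite in_cons negb_or => /andP [hl' hs'].
    rewrite big_cons psiM (psi_powz_c _ (psi_t p' q' hij)) IH' //=.
    have -> : (p' == i) && (q' == j) = false.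
      by apply/negbTE; apply: contra hl' => /andP [/eqP -> /eqP ->]; apply: eqxx.
    by rewrite /bZ; congr (_, _, _); lia.
  by rewrite /bZ; congr (_, _, _); lia.
have -> : (p == i) && (q == j) = false.
  by apply/negbTE; apply: contra hne => /andP [/eqP -> /eqP ->]; apply: eqxx.
rewrite IH //= /bZ; congr (_, _, _); lia.
Qed.

Lemma eqm_psi (H : G -> Prop) i j y z : (forall w, H w -> Ker i j w) ->
  eqm H y z -> psi i j y = psi i j z.
Proof.
move=> hH h; have := hH _ h; rewrite /Ker psiM psiV.
case: (psi i j y) => [[a1 b1] c1]; case: (psi i j z) => [[a2 b2] c2] /= [h1 h2 h3].
have e1 : a2 = a1 by lia.
have e2 : b2 = b1 by lia.
subst; congr (_, _, _); nia.
Qed.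

Theorem main_abs y : RR y -> gamma (G:=Gr) 3 y -> NN y.
Proof.
move=> Hy Hg; have [k hk] := KK_D (step1 Hy Hg).
have k0 : forall i j : 'I_n, i < j -> k i j = 0%Z.
  move=> i j hij; have := eqm_psi (@NN_Ker i j) hk.
  by rewrite psi_D // (gamma3_Ker i j Hg) => -[].
have hD : D k = 1.
  rewrite /D prod1 // => [[p q]] _ /=.
  case: (ltnP p q) => hpq; first by rewrite k0.
  by rewrite /t ltnNge hpq /= powz1g.
rewrite hD in hk; exact: (eqm_1 nNN hk).
Qed.

End Main.

Definition hinv (p : H3) : H3 := let '(a, b, c) := p in (- a, - b, - c + a * b)%Z.

Lemma hmA p q s : hm p (hm q s) = hm (hm p q) s.
Proof.
case: p => [[a1 b1] c1]; case: q => [[a2 b2] c2]; case: s => [[a3 b3] c3].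
rewrite !hmE; congr (_, _, _); ring.
Qed.

Lemma hm0p p : hm (0, 0, 0)%Z p = p.
Proof. by case: p => [[a b] c]; rewrite hmE; congr (_, _, _); ring. Qed.
Lemma hmp0 p : hm p (0, 0, 0)%Z = p.
Proof. by case: p => [[a b] c]; rewrite hmE; congr (_, _, _); ring. Qed.
Lemma hmV1 p q : hm (hinv p) (hm p q) = q.
Proof.
case: p => [[a1 b1] c1]; case: q => [[a2 b2] c2]; rewrite /hinv !hmE.
congr (_, _, _); ring.
Qed.
Lemma hmV2 p q : hm p (hm (hinv p) q) = q.
Proof.
case: p => [[a1 b1] c1]; case: q => [[a2 b2] c2]; rewrite /hinv !hmE.
congr (_, _, _); ring.
Qed.

Section Eval.
Variable X : choiceType.
Variable g : X -> H3.

Definition lv (a : letter X) : H3 := if a.2 then hinv (g a.1) else g a.1.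
Definition ev (w : seq (letter X)) : H3 := foldr (fun a acc => hm (lv a) acc) (0, 0, 0)%Z w.

Lemma ev_cons_red a w : ev (cons_red a w) = hm (lv a) (ev w).
Proof.
case: w => [|b w] //=.
case: ifP => hc //=.
have hb : b = flip a by apply/eqP; rewrite -cancE.
subst b; rewrite /lv /flip /=; case: (a.2) => /=; by rewrite ?hmV1 ?hmV2.
Qed.

Lemma ev_red w : ev (red w) = ev w.
Proof.
elim: w => [|a w IH] //.
change (ev (cons_red a (red w)) = hm (lv a) (ev w)).
by rewrite ev_cons_red IH.
Qed.

Lemma ev_cat u v : ev (u ++ v) = hm (ev u) (ev v).
Proof.
elim: u => [|a u IH]; first exact: (esym (hm0p (ev v))).
change (hm (lv a) (ev (u ++ v)) = hm (hm (lv a) (ev u)) (ev v)).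
by rewrite IH hmA.
Qed.

Definition evFG (u : FGt X) : H3 := ev (proj1_sig u).

Lemma evFGM (u v : FGt X) : evFG (u * v) = hm (evFG u) (evFG v).
Proof. by rewrite /evFG /= ev_red ev_cat. Qed.

Lemma evFG_gen (l : X) : evFG (fgen l) = g l.
Proof. by rewrite /evFG /= /lv /= hmp0. Qed.
End Eval.

Lemma FG_gen_all (X : choiceType) (u : FGt X) :
  gen (G := grpOf (FGt X)) (fun z => exists j, z = fgen j) u.
Proof.
have h : forall w, gen (G := grpOf (FGt X)) (fun z => exists j, z = fgen j) (mkFG w).
  elim=> [|[a1 a2] w IH]; first exact: gen1.
  have -> : mkFG ((a1, a2) :: w) =
    (if a2 then (fgen a1 : FGt X)^-1 else (fgen a1 : FGt X)) * (mkFG w : FGt X).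
    apply: val_inj; rewrite /= red_redr.
    by case: a2.
  case: a2; [apply: gen_consV | apply: gen_cons] => //; by exists a1.
case: u => w hw.
have -> : exist _ w hw = mkFG w by apply: val_inj; rewrite /= red_id.
exact: h.
Qed.

Lemma FG_unit_gamma3 (y : FGt unit) : gamma (G := grpOf (FGt unit)) 3 y -> y = 1.
Proof.
have hc : forall a b : FGt unit, commute a b.
  move=> a b; apply: (@gen_commute _ (fun z : FGt unit => exists j, z = fgen j)).
  - by move=> s s' [[] ->] [[] ->].
  - exact: FG_gen_all.
  - exact: FG_gen_all.
move: y; apply: gen_sub => //.
- by move=> a b -> ->; rewrite mulg1.
- by move=> a ->; rewrite invg1.
- move=> s [a [b [_ [_ ->]]]].
  by apply/eqP; apply/commgP; apply: hc.
Qed.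

Theorem corollary1p7 (n : nat) (m : 'I_n -> nat) :
  0 < n ->
  (forall i, 0 < m i) ->
  (forall i j, i != j -> coprime (m i) (m j)) ->
  quot_iso
    (mult_num (freeprod_rel m) 2) (mult_den (freeprod_rel m) 2)
    (G := FG (ordinal n)) (H := prodgrp 'I_n (FG unit))
    (fun f : 'I_n -> FG unit => forall i, mult_num (cyc_rel (m i)) 2 (f i))
    (fun f : 'I_n -> FG unit => forall i, mult_den (cyc_rel (m i)) 2 (f i)).
Proof.
move=> _ mpos mcop.
pose psi (i j : 'I_n) := evFG (fun l : 'I_n => (bZ (l == i), bZ (l == j), 0%Z)).
have main : forall y : FG (ordinal n), mult_num (freeprod_rel m) 2 y ->
    mult_den (freeprod_rel m) 2 y.
  move=> y [h1 h2].
  exact: (@main_abs (FGt (ordinal n)) n m (@fgen _) mpos mcop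
            (@FG_gen_all _) psi (fun i j => @evFGM _ _) (fun i j => @evFG_gen _ _) y h1 h2).
exists (fun _ _ => @gone (FG unit)).
split.
- by move=> y _ i; split; exists [::].
- by move=> y z _ _ i; exists [::].
- move=> y hy; split => [_ i|_]; first by exists [::].
  exact: main.
- move=> y hy; exists (@gone (FG (ordinal n))); first by split; exists [::].
  move=> i; have [_ h2] := hy i.
  have hy1 : y i = @gone (FG unit) by apply: FG_unit_gamma3.
  by exists [::]; split => //=; rewrite hy1.
Qed.
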